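(* Let $\mathcal{V}$ be the set of sequences $v=(v_j)_{j\in\mathbb{Z}_+}$ in $[1,\infty)$ with $v_0=1$ and $v_n\ge\sum_{j<n}v_j$ for all $n\in\mathbb{N}$, and for $v\in\mathcal{V}$ and $n\in\mathbb{N}$ put $u_n=v_n-\sum_{j<n}v_j$. For each $v\in\mathcal{V}$ there is exactly one hermitian hypergroup deformation $(\mathbb{Z}_+,* )$ of $(\mathbb{Z}_+,<,\max)$ satisfying $(\delta_n*\delta_n)(0)=1/v_n$ for all $n\in\mathbb{Z}_+$. Moreover, for this deformation, writing $\mathcal{L}_n=\{k\in\mathbb{Z}_+:k<n\}$ and $\lambda$ for its Haar measure: (i) $\lambda(n)=v_n$ for $n\in\mathbb{Z}_+$ and $\lambda(n)-\lambda(\mathcal{L}_n)=u_n$ for $n\in\mathbb{N}$; (ii) $\lambda(\mathcal{L}_n)\le\lambda(n)$ for $n\in\mathbb{N}$; (iii) for $n\in\mathbb{N}$: (a) $(\delta_n*\delta_n)(m)=\lambda(m)/\lambda(n)$ for $m<n$; (b) $(\delta_n*\delta_n)(n)=(\lambda(n)-\lambda(\mathcal{L}_n))/\lambda(n)$; (c) $(\delta_n*\delta_n)(m)=0$ for $m>n$; (iv) for $n\in\mathbb{N}$, $\operatorname{spt}(\delta_n*\delta_n)=\mathcal{L}_n$ if $\lambda(n)=\lambda(\mathcal{L}_n)$, and $\operatorname{spt}(\delta_n*\delta_n)=\mathcal{L}_n\cup\{n\}$ if $\lambda(n)>\lambda(\mathcal{L}_n)$.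
   Context: $\mathbb{Z}_+=\{0,1,2,\dots\}$, $\mathbb{N}=\{1,2,\dots\}$. A hermitian hypergroup deformation of $(\mathbb{Z}_+,<,\max)$ means a convolution $*$ on $\mathbb{Z}_+$ (discrete topology) given on point masses by $\delta_m*\delta_n=\delta_{\max\{m,n\}}$ for $m\ne n$ or $m=n=0$, and $\delta_n*\delta_n=q_n$ for $n\ge1$, where $q_n$ is a probability measure with finite support containing $0$, such that $(\mathbb{Z}_+,* )$ is a hermitian discrete hypergroup: $*$ is associative, $0$ is an identity, $\delta_m*\delta_n=\delta_n*\delta_m$, and $0\in\operatorname{spt}(\delta_m*\delta_n)$ iff $m=n$. For a measure $\mu$, $\mu(j)=\mu(\{j\})$. The Haar measure $\lambda$ of such a hermitian discrete hypergroup is normalized by $\lambda(0)=1$; it is given by $\lambda(n)=1/(\delta_n*\delta_n)(0)$ for $n\ne 0$, and $\lambda(A)=\sum_{j\in A}\lambda(j)$. *)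

(* Defs.v *)
From mathcomp Require Import all_boot all_order all_algebra.
From mathcomp Require Import reals.
Set Implicit Arguments. Unset Strict Implicit. Unset Printing Implicit Defensive.
Import Order.TTheory GRing.Theory Num.Theory.
Local Open Scope ring_scope.

Section Defs.
Variable R : realType.

(* measures on Z_+ (discrete) are functions nat -> R; mu j = mu({j}) *)
Definition dirac (k : nat) : nat -> R := fun j => (j == k)%:R.

Definition spt (mu : nat -> R) : pred nat := fun j => mu j != 0.

Definition prob_fin (mu : nat -> R) : Prop :=
  (forall j, 0 <= mu j) /\
  exists N : nat, (forall j, (N <= j)%N -> mu j = 0) /\ \sum_(j < N) mu j = 1.

(* the deformation of (Z_+,<,max) determined by the family q (q n = delta_n * delta_n
   for n >= 1; q 0 is irrelevant):  deform_conv q m n = delta_m * delta_n *)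
Definition deform_conv (q : nat -> nat -> R) (m n : nat) : nat -> R :=
  if (m != n) || (m == 0)%N then dirac (maxn m n) else q m.

(* (Z_+, * ) is a hermitian discrete hypergroup, where * is given on point masses by
   deform_conv q (and extended bilinearly) *)
Definition hermitian_hypergroup_deformation (q : nat -> nat -> R) : Prop :=
      (forall n, (0 < n)%N -> prob_fin (q n) /\ (0%N \in spt (q n))) /\
      (forall m n, prob_fin (deform_conv q m n)) /\
      (* associativity (on point masses; sums are over a common bound N of the
         supports, beyond which all terms vanish) *)
      (forall a b c (N : nat),
          (forall j, (N <= j)%N -> deform_conv q a b j = 0 /\ deform_conv q b c j = 0) ->
          forall k, \sum_(j < N) deform_conv q a b j * deform_conv q j c k
                  = \sum_(j < N) deform_conv q b c j * deform_conv q a j k) /\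
      (forall n, deform_conv q 0 n = dirac n /\ deform_conv q n 0 = dirac n) /\
      (forall m n, deform_conv q m n = deform_conv q n m) /\
      (forall m n, (0%N \in spt (deform_conv q m n)) = (m == n)).

(* Haar measure normalized by lambda(0) = 1: lambda(n) = 1/(delta_n*delta_n)(0) *)
Definition haar (q : nat -> nat -> R) (n : nat) : R :=
  if n == 0%N then 1 else (deform_conv q n n 0%N)^-1.

Definition haarL (q : nat -> nat -> R) (n : nat) : R := \sum_(k < n) haar q k.

Definition in_V (v : nat -> R) : Prop :=
  [/\ v 0%N = 1, (forall j, 1 <= v j) &
      (forall n, (0 < n)%N -> \sum_(j < n) v j <= v n)].

Definition u_of (v : nat -> R) (n : nat) : R := v n - \sum_(j < n) v j.

End Defs.

(* Main.v *)
Require Import Defs.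
From mathcomp Require Import all_boot all_order all_algebra.
From mathcomp Require Import reals.
From mathcomp Require Import ring lra zify.
From Stdlib Require Import FunctionalExtensionality.
Import Order.TTheory GRing.Theory Num.Theory.
Local Open Scope ring_scope.

Section Gen.
Variable R : realType.
Implicit Types (q : nat -> nat -> R) (f : nat -> R).

Lemma sum_trunc f (M N : nat) : (M <= N)%N -> (forall j, (M <= j)%N -> f j = 0) ->
  \sum_(j < N) f j = \sum_(j < M) f j.
Proof.
move=> MN H; rewrite -(big_mkord xpredT f) -(big_mkord xpredT f).
rewrite (big_cat_nat (leq0n M) MN) /=.
rewrite [X in _ + X]big_nat_cond [X in _ + X]big1 ?addr0 // => j /andP[/andP[Mj _] _]; exact: H.
Qed.

Lemma sum_trunc2 f (M N : nat) : (forall j, (N <= j)%N -> f j = 0) ->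
  (forall j, (M <= j)%N -> f j = 0) ->
  \sum_(j < N) f j = \sum_(j < M) f j.
Proof.
move=> HN HM; case: (leqP M N) => MN; first exact: sum_trunc.
by rewrite (@sum_trunc f N M (ltnW MN)).
Qed.

Lemma sum_dirac f (d N : nat) : (d < N)%N ->
  \sum_(j < N) dirac R d j * f j = f d.
Proof.
move=> dN; rewrite (bigD1 (Ordinal dN)) //= /dirac eqxx mul1r big1 ?addr0 //.
move=> j hj; have -> : (nat_of_ord j == d) = false.
  by apply/negbTE; move: hj; apply: contra => /eqP e; apply/eqP/val_inj.
by rewrite mul0r.
Qed.

Lemma dc_dirac q m n : (m != n) || (m == 0)%N -> deform_conv q m n = dirac R (maxn m n).
Proof. by rewrite /deform_conv => ->. Qed.

Lemma dc_q q m n : ~~ ((m != n) || (m == 0)%N) -> deform_conv q m n = q m.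
Proof. by rewrite /deform_conv => /negbTE ->. Qed.

Lemma dc_comm q m n : deform_conv q m n = deform_conv q n m.
Proof.
rewrite /deform_conv; case: (eqVneq m n) => [->//|ne].
by rewrite /= maxnC.
Qed.

Lemma dc_max q a b c k : (a != b) || (a == 0)%N -> (b != c) || (b == 0)%N ->
  deform_conv q (maxn a b) c k = deform_conv q a (maxn b c) k.
Proof.
move=> hab hbc.
case: (boolP ((maxn a b != c) || (maxn a b == 0)%N)) => h1.
  rewrite (dc_dirac _ _ _ h1) dc_dirac ?maxnA //.
  move: h1 hab hbc; case/orP: (orbN (a == maxn b c)) => [/eqP e|->//].
  rewrite e; case/orP => [/eqP ne|/eqP e2] /orP [/eqP ne2|/eqP e3] /orP [/eqP ne3|/eqP e4];
    apply/orP; lia.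
rewrite (dc_q _ _ _ h1) dc_q.
  move: h1; rewrite negb_or negbK => /andP[/eqP e /eqP n0].
  congr (q _ k); move: hab hbc e n0 => /orP [/eqP ne|/eqP e2] /orP [/eqP ne2|/eqP e3]; lia.
move: h1 hab hbc; rewrite !negb_or !negbK => /andP[/eqP e /eqP n0].
move=> /orP [/eqP ne|/eqP e2] /orP [/eqP ne2|/eqP e3]; apply/andP; split; apply/eqP; lia.
Qed.

End Gen.

Section Spec.
Variable R : realType.
Variable v : nat -> R.
Hypothesis hv : in_V v.

Definition qv (n k : nat) : R :=
  if (k < n)%N then v k / v n else if k == n then u_of v n / v n else 0.

Lemma vpos j : 0 < v j.
Proof. case: hv => _ h _; exact: lt_le_trans ltr01 (h j). Qed.

Lemma vneq0 j : v j != 0.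
Proof. by rewrite gt_eqF ?vpos. Qed.

Lemma dcqE m n k : deform_conv qv m n k = if m != n then dirac R (maxn m n) k else qv m k.
Proof.
rewrite /deform_conv; case: (eqVneq m n) => [<-|ne] //=.
case: (eqVneq m 0%N) => [->|] //=.
rewrite /qv /dirac /u_of big_ord0 subr0 maxnn; case: hv => -> _ _.
by case: k => //=; rewrite divr1.
Qed.

Lemma qv_lt n k : (k < n)%N -> qv n k = v k / v n.
Proof. by rewrite /qv => ->. Qed.

Lemma qv_gt n k : (n < k)%N -> qv n k = 0.
Proof. by move=> h; rewrite /qv ltnNge ltnW //= gtn_eqF. Qed.

Lemma qv_nn n : qv n n = u_of v n / v n.
Proof. by rewrite /qv ltnn eqxx. Qed.

Lemma sumqv n : \sum_(j < n.+1) qv n j = 1.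
Proof.
rewrite big_ord_recr /= qv_nn.
rewrite (eq_bigr (fun j : 'I_n => v j / v n)); last by move=> j _; rewrite qv_lt.
rewrite -mulr_suml /u_of; field; exact: vneq0.
Qed.

Lemma S_lemma c n k : (c < n)%N ->
  \sum_(j < n) v j * deform_conv qv j c k = (k < n)%:R * v k.
Proof.
elim: n => [//|n IH] cn.
rewrite big_ord_recr /=.
case: (ltngtP c n) cn => [cn _|nc|<- _]; last first.
- rewrite (eq_bigr (fun i : 'I_c => v i * dirac R c k)); last first.
    move=> i _; rewrite dcqE (ltn_eqF (ltn_ord i)) /= (maxn_idPr (ltnW (ltn_ord i))) //.
  rewrite -mulr_suml dcqE eqxx /= /qv /u_of /dirac.
  have := vneq0 c; case: (ltngtP k c) => [kc|ck|->] /= h.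
  + rewrite ltnS (ltnW kc) /=; field; exact: h.
  + rewrite ltnS leqNgt ck /= mul0r; ring.
  + rewrite ltnSn /=; field; exact: h.
- by rewrite ltnS leqNgt nc.
- rewrite IH // dcqE (gtn_eqF cn) /= (maxn_idPl (ltnW cn)) /dirac.
  case: (ltngtP k n) => [kn|nk|->].
  + by rewrite ltnS (ltnW kn) /= ?mul1r ?mulr0 ?addr0.
  + by rewrite ltnS leqNgt nk /= ?mul0r ?mulr0 ?addr0.
  + by rewrite ltnSn /= ?mul0r ?mulr1 ?mul1r ?add0r.
Qed.

Lemma K_lemma n c k N : c != n -> (forall j, (N <= j)%N -> qv n j = 0) ->
  \sum_(j < N) qv n j * deform_conv qv j c k = deform_conv qv n (maxn n c) k.
Proof.
move=> cn HN.
rewrite (@sum_trunc2 _ (fun j => qv n j * deform_conv qv j c k) n.+1 N); first last.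
- by move=> j hj; rewrite qv_gt // mul0r.
- by move=> j hj; rewrite HN // mul0r.
rewrite big_ord_recr /= qv_nn.
rewrite (eq_bigr (fun j : 'I_n => (v j * deform_conv qv j c k) / v n)); last first.
  by move=> j _; rewrite qv_lt // mulrAC.
rewrite -mulr_suml.
have hn := vneq0 n.
case: (ltngtP c n) cn => // [cn' _|nc _].
- rewrite S_lemma // !dcqE eqxx /= (gtn_eqF cn') /= (maxn_idPl (ltnW cn')).
  rewrite /qv /dirac.
  case: (ltngtP k n) => [kn|nk|->] /=.
  + by rewrite mulr0 addr0 mul1r.
  + by rewrite mulr0 addr0 !mul0r.
  + by rewrite mulr1 !mul0r add0r.
- rewrite dcqE (ltn_eqF nc) /= (maxn_idPr (ltnW nc)).
  rewrite (eq_bigr (fun i : 'I_n => v i * dirac R c k)); last first.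
    move=> i _; rewrite dcqE (ltn_eqF (ltn_trans (ltn_ord i) nc)) /=.
    by rewrite (maxn_idPr (ltnW (ltn_trans (ltn_ord i) nc))).
  rewrite -mulr_suml /u_of; field; exact: hn.
Qed.

Lemma dirac_lt d N : (forall j, (N <= j)%N -> dirac R d j = 0) -> (d < N)%N.
Proof.
move=> H; rewrite ltnNge; apply/negP => h; have := H d h.
by rewrite /dirac eqxx; apply/eqP; rewrite oner_neq0.
Qed.

Lemma assoc_qv a b c N :
  (forall j, (N <= j)%N -> deform_conv qv a b j = 0 /\ deform_conv qv b c j = 0) ->
  forall k, \sum_(j < N) deform_conv qv a b j * deform_conv qv j c k
          = \sum_(j < N) deform_conv qv b c j * deform_conv qv a j k.
Proof.
move=> HN k.
case: (boolP ((a != b) || (a == 0)%N)) => hab; case: (boolP ((b != c) || (b == 0)%N)) => hbc.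
- have h1 : (maxn a b < N)%N.
    by apply: dirac_lt => j /HN []; rewrite (@dc_dirac R qv a b hab).
  have h2 : (maxn b c < N)%N.
    by apply: dirac_lt => j /HN [_]; rewrite (@dc_dirac R qv b c hbc).
  rewrite (@dc_dirac R qv a b hab) (@dc_dirac R qv b c hbc).
  rewrite (@sum_dirac R (fun j => deform_conv qv j c k) _ N h1).
  rewrite (@sum_dirac R (fun j => deform_conv qv a j k) _ N h2); exact: dc_max.
- have h1 : (maxn a b < N)%N.
    by apply: dirac_lt => j /HN []; rewrite (@dc_dirac R qv a b hab).
  rewrite (@dc_dirac R qv a b hab) (@sum_dirac R (fun j => deform_conv qv j c k) _ N h1) (@dc_q R qv b c hbc).
  have HN2 : forall j, (N <= j)%N -> qv b j = 0.
    by move=> j /HN [_]; rewrite (@dc_q R qv b c hbc).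
  move: hbc; rewrite negb_or negbK => /andP[/eqP bc b0]; subst c.
  have ab : a != b by case/orP: hab => // /eqP a0; rewrite a0 eq_sym.
  rewrite (eq_bigr (fun j : 'I_N => qv b j * deform_conv qv j a k)); last first.
    by move=> j _; rewrite dc_comm.
  by rewrite K_lemma // dc_comm maxnC.
- have HN2 : forall j, (N <= j)%N -> qv a j = 0.
    by move=> j /HN []; rewrite (@dc_q R qv a b hab).
  have h2 : (maxn b c < N)%N.
    by apply: dirac_lt => j /HN [_]; rewrite (@dc_dirac R qv b c hbc).
  rewrite (@dc_q R qv a b hab) (@dc_dirac R qv b c hbc).
  rewrite (@sum_dirac R (fun j => deform_conv qv a j k) _ N h2).
  move: hab; rewrite negb_or negbK => /andP[/eqP ab a0]; subst b.
  have ac : c != a by case/orP: hbc => [|/eqP a0']; [rewrite eq_sym | rewrite a0' in a0].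
  by rewrite K_lemma.
- move: hab hbc; rewrite !negb_or !negbK => /andP[/eqP ab a0] /andP[/eqP bc _]; subst.
  rewrite !(@dc_q R qv c c) ?eqxx //=.
  by apply: eq_bigr => j _; rewrite dc_comm.
Qed.

Lemma v0 : v 0%N = 1. Proof. by case: hv. Qed.

Lemma u_ge0 n : 0 <= u_of v n.
Proof.
case: n => [|n]; first by rewrite /u_of big_ord0 subr0 ltW ?vpos.
by case: hv => _ _ /(_ n.+1 isT) h; rewrite /u_of subr_ge0.
Qed.

Lemma qv_ge0 n j : 0 <= qv n j.
Proof.
rewrite /qv; case: ifP => _; first by rewrite divr_ge0 // ltW ?vpos.
case: ifP => _ //; by rewrite divr_ge0 ?u_ge0 // ltW ?vpos.
Qed.

Lemma qv_prob n : prob_fin (qv n).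
Proof. split; first exact: qv_ge0. by exists n.+1; split; [move=> j; apply: qv_gt | exact: sumqv]. Qed.

Lemma dirac_prob d : prob_fin (dirac R d).
Proof.
split; first by move=> j; rewrite /dirac ler0n.
exists d.+1; split; first by move=> j hj; rewrite /dirac; case: eqP => // e; rewrite e ltnn in hj.
rewrite -(@sum_dirac R (fun _ => 1) d d.+1 (ltnSn d)).
by apply: eq_bigr => j _; rewrite mulr1.
Qed.

Lemma qv_n0 n : (0 < n)%N -> qv n 0%N != 0.
Proof. by move=> n0; rewrite qv_lt // mulf_neq0 ?invr_eq0 ?vneq0. Qed.

Lemma hyp_qv : hermitian_hypergroup_deformation qv.
Proof.
split; first by move=> n n0; split; [exact: qv_prob | rewrite unfold_in; exact: qv_n0].
split.
  move=> m n; case: (boolP ((m != n) || (m == 0)%N)) => h.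
    by rewrite (@dc_dirac R qv m n h); exact: dirac_prob.
  by rewrite (@dc_q R qv m n h); exact: qv_prob.
split; first exact: assoc_qv.
split.
  move=> n; split.
    by rewrite (@dc_dirac R qv 0 n) ?eqxx ?orbT // max0n.
  by rewrite (@dc_dirac R qv n 0) ?maxn0 //; case: n.
split; first by move=> m n; exact: dc_comm.
move=> m n; rewrite unfold_in; case: (eqVneq m n) => [<-|ne].
  case: (eqVneq m 0%N) => [->|m0].
    by rewrite (@dc_dirac R qv 0 0) // /dirac /= oner_neq0.
  by rewrite (@dc_q R qv m m) ?eqxx ?m0 // qv_n0 // lt0n.
rewrite (@dc_dirac R qv m n) ?ne // /dirac.
have : (0%N == maxn m n) = false by apply/eqP; move/eqP: ne; lia.
by move=> ->; rewrite eqxx.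
Qed.

Section Uniq.
Variable q' : nat -> nat -> R.
Hypothesis H : hermitian_hypergroup_deformation q'.
Hypothesis Hv : forall n, deform_conv q' n n 0%N = (v n)^-1.

Lemma L0 j m : deform_conv q' j m 0%N = dirac R m j * (v m)^-1.
Proof.
case: (eqVneq j m) => [->|ne]; first by rewrite Hv /dirac eqxx mul1r.
rewrite (@dc_dirac R q' j m) ?ne // /dirac.
have : (0%N == maxn j m) = false by apply/eqP; move/eqP: ne; lia.
by move=> ->; rewrite (_ : (j == m) = false) ?mul0r //; apply/negbTE.
Qed.

Lemma uniq_ne n k : (0 < n)%N -> k != n -> q' n k = qv n k.
Proof.
move=> n0 kn.
case: H => _ [Hprob [Hassoc _]].
have nn : ~~ ((n != n) || (n == 0)%N) by rewrite eqxx /= -lt0n.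
have nk : (n != k) || (n == 0)%N by rewrite eq_sym kn.
case: (Hprob n n) => _ [N1 [HN1 _]].
set N := maxn N1 (maxn n k).+1.
have HvN : forall j, (N <= j)%N -> deform_conv q' n n j = 0 /\ deform_conv q' n k j = 0.
  move=> j hj; split; first by apply: HN1; rewrite /N in hj; lia.
  rewrite (@dc_dirac R q' n k nk) /dirac.
  have : (j == maxn n k) = false by apply/eqP; rewrite /N in hj; lia.
  by move=> ->.
have := Hassoc n n k N HvN 0%N.
rewrite (eq_bigr (fun j : 'I_N => dirac R k j * (deform_conv q' n n j * (v k)^-1))); last first.
  by move=> j _; rewrite L0 mulrCA.
have kN : (k < N)%N by rewrite /N; lia.
have mN : (maxn n k < N)%N by rewrite /N; lia.
rewrite (@sum_dirac R (fun j => deform_conv q' n n j * (v k)^-1) k N kN).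
rewrite (@dc_dirac R q' n k nk).
rewrite (@sum_dirac R (fun j => deform_conv q' n j 0%N) _ N mN) L0.
rewrite (@dc_q R q' n n nn).
have hk := vneq0 k; have hn := vneq0 n.
case: (ltngtP k n) kn => [kn' _|nk' _|_ //].
- rewrite /dirac eqxx mul1r qv_lt // => e.
  have -> : q' n k = (v n)^-1 * v k by rewrite -e mulrVK // unitfE.
  by rewrite mulrC.
- rewrite /dirac (ltn_eqF nk') mul0r qv_gt // => /eqP.
  by rewrite mulf_eq0 invr_eq0 (negbTE hk) orbF => /eqP.
Qed.
Lemma uniq_pt n k : (0 < n)%N -> q' n k = qv n k.
Proof.
move=> n0; case: (eqVneq k n) => [->|kn]; last exact: uniq_ne.
case: H => _ [Hprob _].
have nn : ~~ ((n != n) || (n == 0%N)) by rewrite eqxx /= -lt0n.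
case: (Hprob n n) => _ [N1 [HN1 Hs]].
move: Hs; rewrite (@dc_q R q' n n nn) in HN1 *.
rewrite (@sum_trunc2 _ (q' n) n.+1 N1) //; last first.
  by move=> j hj; rewrite uniq_ne // ?qv_gt // gtn_eqF.
rewrite big_ord_recr /=.
rewrite (eq_bigr (fun j : 'I_n => v j / v n)); last first.
  by move=> j _; rewrite uniq_ne ?qv_lt ?ltn_eqF.
rewrite -mulr_suml qv_nn /u_of => e.
have -> : q' n n = 1 - (\sum_(i < n) v i) / v n by rewrite -e; ring.
field; exact: vneq0.
Qed.

Lemma uniq_all m n : deform_conv q' m n = deform_conv qv m n.
Proof.
case: (boolP ((m != n) || (m == 0)%N)) => h.
  by rewrite (@dc_dirac R q' m n h) (@dc_dirac R qv m n h).
rewrite (@dc_q R q' m n h) (@dc_q R qv m n h).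
apply: functional_extensionality => k; apply: uniq_pt.
by move: h; rewrite negb_or negbK lt0n => /andP[_].
Qed.
End Uniq.

End Spec.

Arguments qv {R} v n k.
Arguments dcqE {R v}.
Arguments qv_nn {R v}.
Arguments qv_lt {R v}.
Arguments qv_gt {R v}.
Arguments v0 {R v}.
Arguments hyp_qv {R v}.
Arguments uniq_all {R v}.
Arguments vneq0 {R v}.
Theorem corollary3p4 (R : realType) (v : nat -> R) (hv : in_V v) :
  exists q : nat -> nat -> R,
    hermitian_hypergroup_deformation q /\
        (forall n, deform_conv q n n 0%N = (v n)^-1) /\
        (* uniqueness *)
        (forall q' : nat -> nat -> R,
            hermitian_hypergroup_deformation q' ->
            (forall n, deform_conv q' n n 0%N = (v n)^-1) ->
            forall m n, deform_conv q' m n = deform_conv q m n) /\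
        (* (i) *)
        (forall n, haar q n = v n) /\
        (forall n, (0 < n)%N -> haar q n - haarL q n = u_of v n) /\
        (* (ii) *)
        (forall n, (0 < n)%N -> haarL q n <= haar q n) /\
        (* (iii) *)
        (forall n, (0 < n)%N ->
           [/\ forall m, (m < n)%N -> deform_conv q n n m = haar q m / haar q n,
               deform_conv q n n n = (haar q n - haarL q n) / haar q n &
               forall m, (n < m)%N -> deform_conv q n n m = 0]) /\
        (* (iv) *)
        (forall n, (0 < n)%N ->
           (haar q n = haarL q n -> spt (deform_conv q n n) =i [pred k | (k < n)%N]) /\
           (haarL q n < haar q n -> spt (deform_conv q n n) =i [pred k | (k <= n)%N])).
Proof.
have hn0 : forall n, deform_conv (qv v) n n 0%N = (v n)^-1.
  move=> n; rewrite (dcqE hv) eqxx /=; case: n => [|n].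
    by rewrite qv_nn /u_of big_ord0 subr0 divff ?(vneq0 hv) // (v0 hv) invr1.
  by rewrite qv_lt // (v0 hv) mul1r.
have hhaar : forall n, haar (qv v) n = v n.
  by move=> n; rewrite /haar; case: eqP => [->|_]; [rewrite (v0 hv) | rewrite hn0 invrK].
have hL : forall n, haarL (qv v) n = \sum_(k < n) v k.
  by move=> n; apply: eq_bigr => k _; rewrite hhaar.
have hnn : forall n k, deform_conv (qv v) n n k = qv v n k.
  by move=> n k; rewrite (dcqE hv) eqxx.
exists (qv v); split; first exact: (hyp_qv hv).
split; first exact: hn0.
split; first by move=> q' Hq' Hv' m n; apply: (uniq_all hv).
split; first exact: hhaar.
split; first by move=> n _; rewrite hhaar hL.
split; first by move=> n n0; rewrite hhaar hL; case: hv => _ _ /(_ n n0).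
split.
  move=> n n0; split.
  - by move=> m mn; rewrite hnn qv_lt // !hhaar.
  - by rewrite hnn qv_nn hhaar hL.
  - by move=> m nm; rewrite hnn qv_gt.
move=> n n0; rewrite hhaar hL; split => h k; rewrite unfold_in /= hnn /qv.
- case: ltngtP => [kn|nk|->] /=.
  + by rewrite mulf_neq0 ?invr_eq0 ?(vneq0 hv).
  + by rewrite eqxx inE /= ltnNge ltnW.
  + by rewrite /u_of h subrr mul0r eqxx inE /= ltnn.
- case: ltngtP => [kn|nk|->] /=.
  + by rewrite inE /= (ltnW kn) mulf_neq0 ?invr_eq0 ?(vneq0 hv).
  + by rewrite eqxx inE /= leqNgt nk.
  + rewrite inE /= leqnn mulf_neq0 ?invr_eq0 ?(vneq0 hv) //.
    by rewrite /u_of subr_eq0 gt_eqF.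
Qed.
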